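(* For every integer $n\ge 1$, the polytope $\overline{Q}_n=\sum_{S\in\mathcal{I}_n}\Delta_S\subseteq\mathbb{R}^{n+1}$ is simple and $n$-dimensional.
   Context: The sum is a Minkowski sum. $\mathcal{I}_n=\{S\cup\{n+1\} : S\subseteq[n],\ |S|\in\{1,2\}\}$, and for $S\subseteq[n+1]$, $\Delta_S=\mathrm{conv}\{e_i: i\in S\}$ with $e_i$ the standard basis vectors of $\mathbb{R}^{n+1}$. A $d$-dimensional polytope is simple if each vertex lies in exactly $d$ facets. *)

(* Defs.v *)
From HB Require Import structures.
From mathcomp Require Import all_boot all_order all_algebra.
From mathcomp Require Import reals.
Set Implicit Arguments. Unset Strict Implicit. Unset Printing Implicit Defensive.
Import Order.TTheory GRing.Theory Num.Theory.
Local Open Scope ring_scope.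

Section Polytopes.
Variable R : realType.
Variable m : nat.

Definition pt := 'rV[R]_m.
Definition region := pt -> Prop.

Definition e_ (i : 'I_m) : pt := \row_(j < m) (i == j)%:R.

Definition conv (k : nat) (p : 'I_k -> pt) : region :=
  fun x => exists lam : 'I_k -> R,
    (forall i, 0 <= lam i) /\ \sum_(i < k) lam i = 1 /\
    x = \sum_(i < k) lam i *: p i.

Definition Delta (S : {set 'I_m}) : region :=
  conv (fun i : 'I_#|S| => e_ (enum_val i)).

Definition minkowski_sum (I : {set {set 'I_m}}) (P : {set 'I_m} -> region) : region :=
  fun x => exists f : {set 'I_m} -> pt,
    (forall S, S \in I -> P S (f S)) /\ x = \sum_(S in I) f S.

Definition dot (a x : pt) : R := \sum_(j < m) a 0 j * x 0 j.

(* affine dimension: P has dimension d iff d is the maximal rank of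
   the family of differences x_i - x_0 of finitely many points of P
   (in particular P is nonempty) *)
Definition diffmx (k : nat) (x : 'I_k.+1 -> pt) : 'M[R]_(k, m) :=
  \matrix_(i < k, j < m) (x (lift ord0 i) 0 j - x ord0 0 j).

Definition has_dim (P : region) (d : nat) : Prop :=
  (exists k (x : 'I_k.+1 -> pt), (forall i, P (x i)) /\ \rank (diffmx x) = d) /\
  (forall k (x : 'I_k.+1 -> pt), (forall i, P (x i)) -> (\rank (diffmx x) <= d)%N).

Definition is_face (P F : region) : Prop :=
  exists (a : pt) (b : R), (forall x, P x -> dot a x <= b) /\
    F = (fun x => P x /\ dot a x = b).

Definition is_vertex (P : region) (v : pt) : Prop :=
  is_face P (fun x => x = v).

Definition is_facet (P F : region) (d : nat) : Prop :=
  is_face P F /\ has_dim F d.-1.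

Definition is_simple (P : region) : Prop :=
  exists d : nat, has_dim P d /\
  forall v, is_vertex P v ->
    exists F : 'I_d -> region, injective F /\
      (forall i, is_facet P (F i) d /\ F i v) /\
      (forall G, is_facet P G d -> G v -> exists i, G = F i).

End Polytopes.

(* I_n = { S u {n+1} : S subset [n], |S| in {1,2} }, with coordinates
   1..n+1 indexed by 'I_n.+1 and n+1 being ord_max *)
Definition I_n (n : nat) : {set {set 'I_n.+1}} :=
  [set S : {set 'I_n.+1} | (ord_max \in S) && ((#|S| == 2) || (#|S| == 3))].

Definition Qbar (R : realType) (n : nat) : region R n.+1 :=
  minkowski_sum (I_n n) (@Delta R n.+1).
Arguments Qbar R n : clear implicits.

(* Main.v *)
Require Import Defs.
From HB Require Import structures.
From mathcomp Require Import all_boot all_order all_algebra.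
From mathcomp Require Import reals.
From mathcomp Require Import ring lra zify.
From Stdlib Require Import Classical FunctionalExtensionality PropExtensionality.
Set Implicit Arguments. Unset Strict Implicit. Unset Printing Implicit Defensive.
Import Order.TTheory GRing.Theory Num.Theory.

Section Gen.
Variable R : realType.
Variable m : nat.
Variable I : {set {set 'I_m}}.
Local Open Scope ring_scope.
Local Notation P := (minkowski_sum I (@Delta R m)).
Local Notation pt := (pt R m).

Lemma dotD (a x y : pt) : dot a (x + y) = dot a x + dot a y.
Proof. by rewrite /dot -big_split /=; apply: eq_bigr => j _; rewrite mxE mulrDr. Qed.

Lemma dot0 (a : pt) : dot a 0 = 0.
Proof. by rewrite /dot big1 // => j _; rewrite mxE mulr0. Qed.

Lemma dotZ (a : pt) c (x : pt) : dot a (c *: x) = c * dot a x.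
Proof. by rewrite /dot mulr_sumr; apply: eq_bigr => j _; rewrite mxE mulrCA. Qed.

Lemma dot_sum (a : pt) (J : Type) (r : seq J) (Q : pred J) (F : J -> pt) :
  dot a (\sum_(i <- r | Q i) F i) = \sum_(i <- r | Q i) dot a (F i).
Proof. exact: (big_morph _ (dotD a) (dot0 a)). Qed.

Lemma dot_e (a : pt) i : dot a (e_ R i) = a 0 i.
Proof.
rewrite /dot (bigD1 i) //= big1 => [|j ji]; first by rewrite mxE eqxx mulr1 addr0.
by rewrite mxE eq_sym (negbTE ji) mulr0.
Qed.

Lemma coord_dot (x : pt) j : x 0 j = dot (e_ R j) x.
Proof.
rewrite /dot (bigD1 j) //= big1 => [|k kj]; first by rewrite mxE eqxx mul1r addr0.
by rewrite mxE eq_sym (negbTE kj) mul0r.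
Qed.

Lemma Delta_rep (S : {set 'I_m}) (p : pt) : Delta S p -> exists lam : 'I_#|S| -> R,
  (forall l, 0 <= lam l) /\ \sum_l lam l = 1 /\
  forall a : pt, dot a p = \sum_l lam l * a 0 (enum_val l).
Proof.
move=> [lam [l0 [l1 ->]]]; exists lam; split => //; split => // a.
by rewrite dot_sum; apply: eq_bigr => l _; rewrite dotZ dot_e.
Qed.

Lemma Delta_e (S : {set 'I_m}) i : i \in S -> Delta S (e_ R i).
Proof.
move=> iS; exists (fun l => (enum_val l == i)%:R); split; first by move=> l; rewrite ler0n.
have H l : l != enum_rank_in iS i -> (enum_val l == i) = false.
  move=> nl; apply/negbTE; apply: contra nl => /eqP h.
  by rewrite -{1}(enum_valK_in iS l) h.
split.
  rewrite (bigD1 (enum_rank_in iS i)) //= enum_rankK_in // eqxx big1 ?addr0 //.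
  by move=> l /H ->.
rewrite (bigD1 (enum_rank_in iS i)) //= enum_rankK_in // eqxx scale1r big1 ?addr0 //.
by move=> l /H ->; rewrite scale0r.
Qed.

Definition cp (g : {set 'I_m} -> 'I_m) : pt := \sum_(S in I) e_ R (g S).

Lemma cp_in g : (forall S, S \in I -> g S \in S) -> P (cp g).
Proof. by move=> Hg; exists (fun S => e_ R (g S)); split => // S SI; apply: Delta_e; apply: Hg. Qed.

Lemma dot_cp (a : pt) g : dot a (cp g) = \sum_(S in I) a 0 (g S).
Proof. by rewrite /cp dot_sum; apply: eq_bigr => S _; rewrite dot_e. Qed.

Definition upd (g : {set 'I_m} -> 'I_m) (S0 : {set 'I_m}) (k : 'I_m) := fun S => if S == S0 then k else g S.

Lemma upd_in g (S0 : {set 'I_m}) k : (forall S, S \in I -> g S \in S) -> k \in S0 ->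
  forall S, S \in I -> upd g S0 k S \in S.
Proof. by move=> Hg kS S SI; rewrite /upd; case: eqP => [->|_] //; apply: Hg. Qed.

Lemma dot_cp_upd (a : pt) g (S0 : {set 'I_m}) k : S0 \in I ->
  dot a (cp (upd g S0 k)) = dot a (cp g) + a 0 k - a 0 (g S0).
Proof.
move=> S0I; rewrite !dot_cp (bigD1 S0) //= [in RHS](bigD1 S0) //= /upd eqxx.
rewrite (eq_bigr (fun S => a 0 (g S))) => [|S /andP [_ /negbTE ->] //].
ring.
Qed.

Definition argmx (w : pt) g := forall S, S \in I -> g S \in S /\ forall i, i \in S -> w 0 i <= w 0 (g S).

Lemma Delta_le (S : {set 'I_m}) (p : pt) (w : pt) c : Delta S p -> (forall i, i \in S -> w 0 i <= c) -> dot w p <= c.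
Proof.
move=> /Delta_rep [lam [l0 [l1 ->]]] Hc.
rewrite -[c]mul1r -l1 mulr_suml; apply: ler_sum => l _.
by apply: ler_wpM2l => //; apply: Hc; apply: enum_valP.
Qed.

Lemma max_le (w : pt) g x : argmx w g -> P x -> dot w x <= dot w (cp g).
Proof.
move=> Hg [f [Hf ->]]; rewrite dot_sum dot_cp; apply: ler_sum => S SI.
by apply: Delta_le (Hf S SI) _ => i iS; apply: (proj2 (Hg S SI)).
Qed.

Lemma const_face (a w : pt) g x : argmx a g -> P x -> dot a x = dot a (cp g) ->
  (forall S, S \in I -> forall i, i \in S -> a 0 i = a 0 (g S) -> w 0 i = w 0 (g S)) ->
  dot w x = dot w (cp g).
Proof.
move=> Hg [f [Hf ->]] Heq Hw; rewrite dot_sum dot_cp in Heq.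
rewrite dot_sum dot_cp.
have H0 S : S \in I -> 0 <= a 0 (g S) - dot a (f S).
  move=> SI; rewrite subr_ge0; apply: Delta_le (Hf S SI) _ => i iS.
  exact: (proj2 (Hg S SI)).
have key S : S \in I -> dot a (f S) = a 0 (g S).
  move=> SI; apply/eqP; rewrite eq_sym -subr_eq0; apply/eqP.
  apply: (psumr_eq0P H0) => //.
  by rewrite sumrB Heq subrr.
apply: eq_bigr => S SI.
have [lam [l0 [l1 Hd]]] := Delta_rep (Hf S SI).
have kS := key S SI; rewrite Hd in kS.
have Hz : \sum_l lam l * (a 0 (g S) - a 0 (enum_val l)) = 0.
  under eq_bigr do rewrite mulrBr.
  by rewrite sumrB kS -mulr_suml l1 mul1r subrr.
rewrite Hd -[w 0 (g S)]mul1r -l1 mulr_suml; apply: eq_bigr => l _.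
have Hl : lam l * (a 0 (g S) - a 0 (enum_val l)) = 0.
  apply: (psumr_eq0P _ Hz) => // l' _; apply: mulr_ge0 => //.
  by rewrite subr_ge0; apply: (proj2 (Hg S SI)); apply: enum_valP.
move: Hl => /eqP.
rewrite mulf_eq0 => /orP [/eqP -> | ]; first by rewrite !mul0r.
rewrite subr_eq0 => /eqP e; rewrite (Hw S SI) //; first exact: enum_valP.
Qed.

Lemma sum_coords (x : pt) : P x -> dot (const_mx 1) x = #|I|%:R.
Proof.
move=> [f [Hf ->]]; rewrite dot_sum -sumr_const; apply: eq_bigr => S SI.
have [lam [l0 [l1 ->]]] := Delta_rep (Hf S SI).
by under eq_bigr do rewrite mxE mulr1.
Qed.

End Gen.

Section Rank.
Variable R : realType.
Local Open Scope ring_scope.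

Lemma rank_diag r mm (M : 'M[R]_(r, mm)) (c : 'I_r -> 'I_mm) :
  (forall i j, M i (c j) = (i == j)%:R) -> \rank M = r.
Proof.
move=> Hc; apply/eqP; rewrite eqn_leq rank_leq_row /=.
have HM : M *m \matrix_(j, k) (j == c k)%:R = 1%:M.
  apply/matrixP => i k; rewrite !mxE (bigD1 (c k)) //= big1 => [|j jk].
    by rewrite mxE eqxx mulr1 addr0 Hc.
  by rewrite mxE (negbTE jk) mulr0.
by rewrite -{1}(mxrank1 R r) -HM mxrankM_maxl.
Qed.

Lemma rank_ub k mm s (A : 'M[R]_(k, mm)) (W : 'M[R]_(s, mm)) :
  A *m W^T = 0 -> \rank W = s -> (\rank A + s <= mm)%N.
Proof.
move=> AW rW.
have : (W <= kermx A^T)%MS by rewrite sub_kermx -[W]trmxK -trmx_mul AW trmx0.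
move/mxrankS; rewrite mxrank_ker mxrank_tr rW.
have := rank_leq_col A; lia.
Qed.
End Rank.

Section Low.
Variable R : realType.
Variable m : nat.
Variable I : {set {set 'I_m}}.
Local Open Scope ring_scope.

Lemma lower_pts (Q : region R m) (g0 : {set 'I_m} -> 'I_m) r (k : 'I_r -> 'I_m)
  (Sk : 'I_r -> {set 'I_m}) :
  (forall i, Sk i \in I) -> (forall i j, g0 (Sk i) != k j) -> injective k ->
  Q (cp R I g0) -> (forall i, Q (cp R I (upd g0 (Sk i) (k i)))) ->
  exists x : 'I_r.+1 -> pt R m, (forall i, Q (x i)) /\ \rank (Defs.diffmx x) = r.
Proof.
move=> HS Hg kinj Q0 Qi.
exists (fun i => if unlift ord0 i is Some j then cp R I (upd g0 (Sk j) (k j)) else cp R I g0).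
split; first by move=> i; case: unlift.
apply: (@rank_diag R _ _ _ k) => i j.
rewrite mxE liftK unlift_none !coord_dot dot_cp_upd // !mxE (inj_eq kinj).
rewrite [k j == g0 _]eq_sym (negbTE (Hg i j)) [j == i]eq_sym.
by rewrite subr0 addrC addKr.
Qed.

Lemma upper_pts (c : pt R m) (g : {set 'I_m} -> 'I_m) s (kap : 'I_m -> 'I_s)
  (rho : 'I_s -> 'I_m) k (x : 'I_k.+1 -> pt R m) :
  argmx I c g ->
  (forall i, minkowski_sum I (@Delta R m) (x i) /\ dot c (x i) = dot c (cp R I g)) ->
  (forall S, S \in I -> forall i, i \in S -> c 0 i = c 0 (g S) -> kap i = kap (g S)) ->
  (forall r, kap (rho r) = r) ->
  (\rank (Defs.diffmx x) + s <= m)%N.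
Proof.
move=> Hg Hx Hk Hr.
pose W : 'M[R]_(s, m) := \matrix_(r, j) (kap j == r)%:R.
apply: (@rank_ub R _ _ _ _ W).
  apply/matrixP => i r; rewrite !mxE.
  pose wr : pt R m := \row_j (kap j == r)%:R.
  have Hc j : dot wr (x j) = dot wr (cp R I g).
    apply: (const_face Hg (proj1 (Hx j)) (proj2 (Hx j))) => S SI l lS e.
    by rewrite !mxE (Hk S SI l lS e).
  have -> : \sum_j Defs.diffmx x i j * W^T j r = dot wr (x (lift ord0 i)) - dot wr (x ord0).
    rewrite /dot -sumrB; apply: eq_bigr => j _; rewrite !mxE.
    by rewrite mulrBl mulrC [X in _ - X]mulrC.
  by rewrite !Hc subrr.
apply: (@rank_diag R _ _ _ rho) => i j.
by rewrite mxE Hr eq_sym.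
Qed.
End Low.

Section Spec.
Variable R : realType.
Variable n : nat.
Local Open Scope ring_scope.
Local Notation t := (@ord_max n).
Local Notation II := (I_n n).
Local Notation Q := (Qbar R n).
Local Notation cpI := (cp R (I_n n)).
Local Notation pt := (pt R n.+1).

Lemma QE : Q = minkowski_sum II (@Delta R n.+1).
Proof. by []. Qed.

Lemma memI (S : {set 'I_n.+1}) : S \in II -> t \in S.
Proof. by rewrite inE => /andP []. Qed.

Lemma pairI (i : 'I_n.+1) : i != t -> [set i; t] \in II.
Proof. by move=> it; rewrite inE !inE eqxx orbT cards2 it. Qed.

Lemma tripI (i j : 'I_n.+1) : i != t -> j != t -> i != j -> i |: [set j; t] \in II.
Proof.
move=> it jt ij; rewrite inE !inE eqxx !orbT /= cardsU1 cards2 jt !inE.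
by rewrite (negbTE ij) (negbTE it).
Qed.

Lemma in_pair (i l : 'I_n.+1) : (l \in [set i; t]) = (l == i) || (l == t).
Proof. by rewrite !inE. Qed.

Lemma in_trip (i j l : 'I_n.+1) : (l \in i |: [set j; t]) = [|| l == i, l == j | l == t].
Proof. by rewrite !inE. Qed.

Definition gmax (c : pt) (S : {set 'I_n.+1}) : 'I_n.+1 :=
  Order.arg_max t (fun i => i \in S) (fun i => c 0 i).

Lemma gmax_argmx (c : pt) : argmx II c (gmax c).
Proof.
move=> S SI; have tS := memI SI; rewrite /gmax.
by case: (arg_maxP (fun i => c 0 i) tS) => g gS Hg; split => // i iS; apply: Hg.
Qed.

Lemma gmax_in (c : pt) S : S \in II -> gmax c S \in S.
Proof. by move=> SI; case: (gmax_argmx c SI). Qed.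

Lemma gmax_ge (c : pt) S i : S \in II -> i \in S -> c 0 i <= c 0 (gmax c S).
Proof. by move=> SI iS; case: (gmax_argmx c SI) => _; apply. Qed.

Lemma gconst_argmx (c : pt) : (forall l, c 0 l <= c 0 t) -> argmx II c (fun _ => t).
Proof. by move=> H S SI; split; [apply: memI | move=> i _; apply: H]. Qed.

Lemma argmx_upd (c : pt) g (S0 : {set 'I_n.+1}) k :
  argmx II c g -> S0 \in II -> k \in S0 -> c 0 k = c 0 (g S0) -> argmx II c (upd g S0 k).
Proof.
move=> Hg S0I kS e S SI; rewrite /upd; case: eqP => [->|_]; last exact: Hg.
by split => // i iS; rewrite e; apply: (proj2 (Hg S0 S0I)).
Qed.

Lemma cp_Q g : (forall S, S \in II -> g S \in S) -> Q (cpI g).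
Proof. exact: cp_in. Qed.

Lemma argmx_in (c : pt) g : argmx II c g -> forall S, S \in II -> g S \in S.
Proof. by move=> Hg S SI; case: (Hg S SI). Qed.

Lemma dot0l (x : pt) : dot (const_mx 0) x = 0.
Proof. by rewrite /dot big1 // => j _; rewrite mxE mul0r. Qed.

Lemma dot_affine (c w : pt) (gam del : R) (x : pt) :
  (forall l, c 0 l = gam + del * w 0 l) -> Q x -> dot c x = gam * #|II|%:R + del * dot w x.
Proof.
move=> Hc Qx; rewrite -(sum_coords Qx) /dot mulr_sumr mulr_sumr -big_split /=.
by apply: eq_bigr => l _; rewrite Hc !mxE; ring.
Qed.

Lemma dim_P : has_dim Q n.
Proof.
split.
  pose k := fun r : 'I_n => widen_ord (leqnSn n) r.
  have kt r : k r != t by rewrite -val_eqE /= neq_ltn ltn_ord.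
  exists n; apply: (@lower_pts R _ II Q (fun _ => t) n k (fun r => [set k r; t])).
  - by move=> r; apply: pairI.
  - by move=> r r'; rewrite eq_sym.
  - by move=> r r' /(congr1 val) => /= e; apply: val_inj.
  - by apply: cp_Q => S SI; apply: memI.
  - move=> r; apply: cp_Q; apply: upd_in; first by move=> S SI; apply: memI.
    by rewrite in_pair eqxx.
move=> K x Hx.
have := @upper_pts R _ II (const_mx 0) (fun _ => t) 1 (fun _ => ord0) (fun _ => t) K x.
have H1 : forall i, Q (x i) /\ dot (const_mx 0) (x i) = dot (const_mx 0) (cpI (fun _ => t)).
  by move=> i; rewrite !dot0l.
have H0 : argmx II (const_mx 0 : pt) (fun _ => t).
  by apply: gconst_argmx => l; rewrite !mxE.
move/(_ H0 H1).
have H2 : forall r : 'I_1, (fun _ : 'I_n.+1 => ord0) t = r by move=> r; rewrite (ord1 r).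
by move=> /(_ (fun S _ i _ _ => erefl) H2); rewrite addn1 ltnS.
Qed.


Lemma ltn_t (i : 'I_n.+1) : i != t -> (i < n)%N.
Proof.
move=> it; move: (ltn_ord i); rewrite ltnS leq_eqVlt => /orP [/eqP e|//].
by case/eqP: it; apply: val_inj.
Qed.

Definition kk (i : 'I_n.+1) (r : 'I_n.-1) : 'I_n.+1 :=
  inord (if (r < i)%N then nat_of_ord r else r.+1).

Lemma kk_val i r : (0 < n)%N -> nat_of_ord (kk i r) = if (r < i)%N then nat_of_ord r else r.+1.
Proof.
move=> hn; rewrite inordK //; have := ltn_ord r; case: ifP => _; lia.
Qed.

Lemma kk_neq_i i r : (0 < n)%N -> kk i r != i.
Proof.
move=> hn; rewrite -val_eqE /= kk_val //; case: ifP => h; apply/eqP; lia.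
Qed.

Lemma kk_neq_t i r : (0 < n)%N -> kk i r != t.
Proof.
move=> hn; rewrite -val_eqE /= kk_val //; have := ltn_ord r; case: ifP => h ?; apply/eqP; lia.
Qed.

Lemma kk_inj i : (0 < n)%N -> injective (kk i).
Proof.
move=> hn r r' /(congr1 (@nat_of_ord _)); rewrite !kk_val // => e; apply: val_inj => /=.
have := ltn_ord r; have := ltn_ord r'.
by move: e; case: ifP => ?; case: ifP => ?; lia.
Qed.

Section Vert.
Variables a v : pt.
Variable Hv : Q v.
Variable Hval : forall x, Q x -> dot a x <= dot a v.
Variable Huniq : forall x, Q x -> dot a x = dot a v -> x = v.
Local Notation ga := (gmax a).

Lemma ga_in : forall S, S \in II -> ga S \in S.
Proof. exact: argmx_in (gmax_argmx a). Qed.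

Lemma v_cp : v = cpI ga.
Proof.
have Qg : Q (cpI ga) by apply: cp_Q; apply: ga_in.
symmetry; apply: Huniq => //; apply/eqP; rewrite eq_le Hval //=.
exact: max_le (gmax_argmx a) Hv.
Qed.

Lemma strict S i : S \in II -> i \in S -> i != ga S -> a 0 i < a 0 (ga S).
Proof.
move=> SI iS ig; rewrite lt_neqAle gmax_ge // andbT; apply/negP => /eqP e.
have Hy : Q (cpI (upd ga S i)) by apply: cp_Q; apply: upd_in => //; apply: ga_in.
have Hd : dot a (cpI (upd ga S i)) = dot a v.
  by rewrite dot_cp_upd // e v_cp addrK.
have := Huniq Hy Hd; rewrite v_cp => /(congr1 (fun x => dot (e_ R i) x)).
rewrite dot_cp_upd // !mxE eqxx (negbTE ig) => h.
move: h; rewrite /= => h; lra.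
Qed.

Lemma no_improve (c : pt) S k : (forall x, Q x -> dot c x <= dot c v) ->
  S \in II -> k \in S -> c 0 (ga S) < c 0 k -> False.
Proof.
move=> Hc SI kS lt.
have Hy : Q (cpI (upd ga S k)) by apply: cp_Q; apply: upd_in => //; apply: ga_in.
have := Hc _ Hy; rewrite dot_cp_upd // [in X in _ <= X]v_cp => h; lra.
Qed.

Lemma neq_t i : i != t -> a 0 i != a 0 t.
Proof.
move=> it; have SI := pairI it.
have tS : t \in [set i; t] by rewrite in_pair eqxx orbT.
have iS : i \in [set i; t] by rewrite in_pair eqxx.
have := ga_in SI; rewrite in_pair => /orP [/eqP e|/eqP e].
  have h := strict SI tS; rewrite e in h.
  have ti : t != i by rewrite eq_sym.
  by have := h ti => lt; rewrite gt_eqF.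
have h := strict SI iS; rewrite e in h.
by have := h it => lt; rewrite lt_eqF.
Qed.

Lemma neq_up i j : i != t -> j != t -> i != j -> a 0 t < a 0 i -> a 0 i != a 0 j.
Proof.
move=> it jt ij lt; have SI := tripI it jt ij.
have iS : i \in i |: [set j; t] by rewrite in_trip eqxx.
have jS : j \in i |: [set j; t] by rewrite in_trip eqxx orbT.
have tS : t \in i |: [set j; t] by rewrite in_trip eqxx !orbT.
have := ga_in SI; rewrite in_trip => /or3P [/eqP e|/eqP e|/eqP e].
- have h := strict SI jS; rewrite e in h.
  have ji : j != i by rewrite eq_sym.
  by have := h ji => l2; rewrite gt_eqF.
- have h := strict SI iS; rewrite e in h.
  by have := h ij => l2; rewrite lt_eqF.
- have := gmax_ge a SI iS; rewrite e => h; exfalso; lra.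
Qed.

Lemma ga_pair_low i : i != t -> a 0 i < a 0 t -> ga [set i; t] = t.
Proof.
move=> it lt; have SI := pairI it.
have tS : t \in [set i; t] by rewrite in_pair eqxx orbT.
have := ga_in SI; rewrite in_pair => /orP [/eqP e|/eqP e] //.
by have := gmax_ge a SI tS; rewrite e => h; exfalso; lra.
Qed.

Lemma ga_trip i j : i != t -> j != t -> i != j -> a 0 t < a 0 i -> a 0 j < a 0 i ->
  ga (i |: [set j; t]) = i.
Proof.
move=> it jt ij lt lj; have SI := tripI it jt ij.
have iS : i \in i |: [set j; t] by rewrite in_trip eqxx.
have := ga_in SI; rewrite in_trip => /or3P [/eqP e|/eqP e|/eqP e] //.
- by have := gmax_ge a SI iS; rewrite e => h; exfalso; lra.
- by have := gmax_ge a SI iS; rewrite e => h; exfalso; lra.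
Qed.

Definition w (i : 'I_n.+1) : pt :=
  if a 0 i < a 0 t then - e_ R i else \row_l ((a 0 i <= a 0 l)%R)%:R.

Definition Fi (i : 'I_n.+1) : region R n.+1 := fun x => Q x /\ dot (w i) x = dot (w i) v.

Lemma wL i l : a 0 i < a 0 t -> w i 0 l = - (i == l)%:R.
Proof. by rewrite /w => ->; rewrite !mxE. Qed.

Lemma wU i l : ~~ (a 0 i < a 0 t) -> w i 0 l = ((a 0 i <= a 0 l)%R)%:R.
Proof. by rewrite /w => /negbTE ->; rewrite !mxE. Qed.

Lemma up_lt i : i != t -> ~~ (a 0 i < a 0 t) -> a 0 t < a 0 i.
Proof. move=> it; rewrite -leNgt le_eqVlt => /orP [/eqP e|//]; by move: (neq_t it); rewrite e eqxx. Qed.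

Lemma w_argmx i : i != t -> argmx II (w i) ga.
Proof.
move=> it S SI; split; first exact: ga_in.
move=> l lS; have hg := gmax_ge a SI lS; have ht := gmax_ge a SI (memI SI).
case: (boolP (a 0 i < a 0 t)) => h.
  rewrite !wL //.
  have -> : (i == ga S) = false.
    by apply/negbTE; apply/eqP => e; rewrite -e in ht; lra.
  by rewrite oppr0 oppr_le0 ler0n.
rewrite !wU // ler_nat.
case E: (a 0 i <= a 0 l) => //.
by have := le_trans (idP E) hg => ->.
Qed.

Lemma Fi_valid i : i != t -> forall x, Q x -> dot (w i) x <= dot (w i) v.
Proof. by move=> it x Qx; rewrite v_cp; apply: max_le (w_argmx it) Qx. Qed.

Lemma in_Fi i g : i != t -> argmx II (w i) g -> Fi i (cpI g).
Proof.
move=> it Hg; have Qg : Q (cpI g) by apply: cp_Q; apply: argmx_in Hg.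
split => //; apply/eqP; rewrite eq_le Fi_valid //=.
exact: max_le Hg Hv.
Qed.

Lemma notin_Fi i g S k : i != t -> argmx II (w i) g -> S \in II ->
  w i 0 k < w i 0 (g S) -> ~ Fi i (cpI (upd g S k)).
Proof.
move=> it Hg SI lt [_ e]; have [_ e2] := in_Fi it Hg.
rewrite dot_cp_upd // in e; lra.
Qed.

Lemma Fi_face i : i != t -> is_face Q (Fi i).
Proof. by move=> it; exists (w i), (dot (w i) v); split => //; apply: Fi_valid. Qed.

Lemma Fi_v i : Fi i v.
Proof. by split. Qed.


Lemma Fi_dim i : (0 < n)%N -> i != t -> has_dim (Fi i) n.-1.
Proof.
move=> hn it; split.
  exists n.-1; case: (boolP (a 0 i < a 0 t)) => low.
    have wt : w i 0 t = 0 by rewrite wL // (negbTE it) oppr0.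
    have Hg0 : argmx II (w i) (fun _ => t).
      by apply: gconst_argmx => l; rewrite wt wL // oppr_le0 ler0n.
    apply: (@lower_pts R _ II (Fi i) (fun _ => t) n.-1 (kk i) (fun r => [set kk i r; t])).
    - by move=> r; apply: pairI; apply: kk_neq_t.
    - by move=> r r'; rewrite eq_sym kk_neq_t.
    - exact: kk_inj.
    - exact: in_Fi it Hg0.
    - move=> r; apply: (in_Fi it); apply: argmx_upd => //.
      + by apply: pairI; apply: kk_neq_t.
      + by rewrite in_pair eqxx.
      + by rewrite wt wL // eq_sym (negbTE (kk_neq_i _ _ hn)) oppr0.
  have ut := up_lt it low.
  pose g0 (S : {set 'I_n.+1}) := if i \in S then i else if [exists l in S, a 0 i <= a 0 l] then ga S else t.
  pose Sk (r : 'I_n.-1) := if a 0 i <= a 0 (kk i r) then kk i r |: [set i; t] else [set kk i r; t].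
  have SkI r : Sk r \in II.
    rewrite /Sk; case: ifP => _; [apply: tripI|apply: pairI]; rewrite ?kk_neq_t ?kk_neq_i //.
  have kS r : kk i r \in Sk r.
    by rewrite /Sk; case: ifP => _; rewrite ?in_trip ?in_pair eqxx.
  have g0Sk r : g0 (Sk r) = if a 0 i <= a 0 (kk i r) then i else t.
    rewrite /Sk; case: ifP => h; rewrite /g0; first by rewrite in_trip eqxx orbT.
    rewrite in_pair eq_sym (negbTE (kk_neq_i _ _ hn)) (negbTE it) /=.
    have -> : [exists l in [set kk i r; t], a 0 i <= a 0 l] = false.
      apply/negbTE; apply/existsPn => l; apply/negP => /andP [lS hl].
      move: lS; rewrite in_pair => /orP [/eqP e|/eqP e]; rewrite e in hl.
        by rewrite h in hl.
      lra.
    by [].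
  have Hg0 : argmx II (w i) g0.
    move=> S SI; rewrite /g0; case: ifP => iS.
      by split => // l lS; rewrite !wU // lexx ler_nat leq_b1.
    case: ifP => ex.
      split; first exact: ga_in.
      move=> l lS; rewrite !wU //; case/existsP: ex => l0 /andP [l0S h0].
      have hg := gmax_ge a SI l0S.
      by rewrite (le_trans h0 hg) ler_nat leq_b1.
    split; first exact: memI.
    move=> l lS; rewrite !wU // ler_nat.
    move/negbT/existsPn: ex => /(_ l); rewrite lS /= => /negbTE -> //.
  apply: (@lower_pts R _ II (Fi i) g0 n.-1 (kk i) Sk).
  - exact SkI.
  - by move=> r r'; rewrite g0Sk; case: ifP => _; rewrite eq_sym ?kk_neq_i ?kk_neq_t.
  - exact: kk_inj.
  - exact: in_Fi it Hg0.
  - move=> r; apply: (in_Fi it); apply: argmx_upd => //.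
    rewrite g0Sk !wU //; case: ifP => h; rewrite ?lexx ?h //.
    by rewrite leNgt ut.
move=> K x Hx.
pose kap l : 'I_2 := if w i 0 l == w i 0 i then ord_max else ord0.
pose rho (r : 'I_2) := if r == ord_max then i else t.
have Hwt : w i 0 t != w i 0 i.
  case: (boolP (a 0 i < a 0 t)) => h.
    by rewrite !wL // eqxx (negbTE it) /= oppr0 eq_sym oppr_eq0 oner_eq0.
  by rewrite !wU // lexx leNgt (up_lt it h) /= eq_sym oner_eq0.
have := @upper_pts R _ II (w i) ga 2 kap rho K x (w_argmx it).
have H1 : forall j, Q (x j) /\ dot (w i) (x j) = dot (w i) (cpI ga).
  by move=> j; have [? e] := Hx j; rewrite -v_cp.
have H2 : forall S, S \in II -> forall l, l \in S -> w i 0 l = w i 0 (ga S) -> kap l = kap (ga S).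
  by move=> S _ l _ e; rewrite /kap e.
have H3 : forall r, kap (rho r) = r.
  move=> r; rewrite /rho; case: eqP => [->|ne]; first by rewrite /kap eqxx.
  rewrite /kap (negbTE Hwt); apply: val_inj.
  case: r ne => [[|[|k]] Hk] //= ne.
  by exfalso; apply: ne; apply: val_inj.
move=> /(_ H1 H2 H3); lia.
Qed.

Lemma gt_argmx_low i : i != t -> a 0 i < a 0 t -> argmx II (w i) (fun _ => t).
Proof.
move=> it li; apply: gconst_argmx => l.
by rewrite !wL // (negbTE it) oppr0 oppr_le0 ler0n.
Qed.

Lemma sepLL i j : i != t -> j != t -> i != j -> a 0 i < a 0 t -> a 0 j < a 0 t ->
  exists y, Fi i y /\ ~ Fi j y.
Proof.
move=> it jt ij li lj; exists (cpI (upd (fun _ => t) [set j; t] j)); split.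
  apply: (in_Fi it); apply: argmx_upd; rewrite ?pairI ?in_pair ?eqxx //.
    exact: gt_argmx_low.
  by rewrite !wL // (negbTE ij) (negbTE it).
apply: (notin_Fi jt (gt_argmx_low jt lj) (pairI jt)).
by rewrite !wL // eqxx (negbTE jt) /= oppr0 ltrN10.
Qed.

Lemma sepLU i j : i != t -> j != t -> a 0 i < a 0 t -> ~~ (a 0 j < a 0 t) ->
  exists y, Fi j y /\ ~ Fi i y.
Proof.
move=> it jt li lj; have uj := up_lt jt lj.
have ep := ga_pair_low it li.
exists (cpI (upd ga [set i; t] i)); split.
  apply: (in_Fi jt); apply: argmx_upd; rewrite ?pairI ?in_pair ?eqxx //.
    exact: w_argmx.
  rewrite ep !wU //; congr (_ %:R).
  by rewrite leNgt (lt_trans li uj) leNgt uj.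
apply: (notin_Fi it (w_argmx it) (pairI it)).
by rewrite ep !wL // eqxx (negbTE it) /= oppr0 ltrN10.
Qed.

Lemma sepUU i j : i != t -> j != t -> i != j -> ~~ (a 0 i < a 0 t) -> ~~ (a 0 j < a 0 t) ->
  a 0 j < a 0 i -> exists y, Fi j y /\ ~ Fi i y.
Proof.
move=> it jt ij li lj ji; have ui := up_lt it li.
have SI := tripI it jt ij.
have ep := ga_trip it jt ij ui ji.
exists (cpI (upd ga (i |: [set j; t]) j)); split.
  apply: (in_Fi jt); apply: argmx_upd; rewrite ?in_trip ?eqxx ?orbT //.
    exact: w_argmx.
  by rewrite ep !wU // lexx (ltW ji).
apply: (notin_Fi it (w_argmx it) SI).
by rewrite ep !wU // lexx leNgt ji ltr01.
Qed.

Lemma Fi_inj i j : i != t -> j != t -> Fi i = Fi j -> i = j.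
Proof.
move=> it jt e; case: (eqVneq i j) => // ij; exfalso.
have sep : forall y, Fi i y -> ~ Fi j y -> False by move=> y h1; rewrite -e.
have sep' : forall y, Fi j y -> ~ Fi i y -> False by move=> y h1; rewrite e.
have ji : j != i by rewrite eq_sym.
case: (boolP (a 0 i < a 0 t)) => li; case: (boolP (a 0 j < a 0 t)) => lj.
- by have [y [h1 h2]] := sepLL it jt ij li lj; apply: sep h1 h2.
- by have [y [h1 h2]] := sepLU it jt li lj; apply: sep' h1 h2.
- by have [y [h1 h2]] := sepLU jt it lj li; apply: sep h1 h2.
have := neq_up it jt ij (up_lt it li); rewrite neq_lt => /orP [h|h].
  by have [y [h1 h2]] := sepUU jt it ji lj li h; apply: sep h1 h2.
by have [y [h1 h2]] := sepUU it jt ij li lj h; apply: sep' h1 h2.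
Qed.

Lemma face_eq (c w0 : pt) gam del : del != 0 -> (forall l, c 0 l = gam + del * w0 0 l) ->
  (fun x => Q x /\ dot c x = dot c v) = (fun x => Q x /\ dot w0 x = dot w0 v).
Proof.
move=> dne Hcw; apply: functional_extensionality => x.
apply: propositional_extensionality; split => [[Qx e]|[Qx e]]; split => //.
  move: e; rewrite (dot_affine Hcw Qx) (dot_affine Hcw Hv) => /addrI /(mulfI dne) h; exact: h.
by rewrite (dot_affine Hcw Qx) (dot_affine Hcw Hv) e.
Qed.

Lemma classify (G : region R n.+1) : (0 < n)%N -> is_facet Q G n -> G v ->
  exists i, i != t /\ G = Fi i.
Proof.
move=> hn [[c [b [Hc eG]]] [[K [y [Hy ry]]] Hub]] Gv.
have bv : b = dot c v by move: Gv; rewrite eG => -[_ ->].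
subst b.
have cv : dot c v = dot c (cpI (gmax c)).
  apply/eqP; rewrite eq_le (max_le (gmax_argmx c) Hv) /=.
  by apply: Hc; apply: cp_Q; apply: argmx_in (gmax_argmx c).
have Hyf : forall j, Q (y j) /\ dot c (y j) = dot c (cpI (gmax c)).
  by move=> j; have := Hy j; rewrite eG => -[? e]; split => //; rewrite e cv.
have lev : forall S, S \in II -> forall l, l \in S -> c 0 l = c 0 (gmax c S) ->
    c 0 t <= c 0 l /\ c 0 t <= c 0 (gmax c S).
  move=> S SI l lS e; have h := gmax_ge c SI (memI SI); split => //; by rewrite e.
have three : forall (f : 'I_n.+1 -> nat) z0 z1 z2, f z0 = 0%N -> f z1 = 1%N -> f z2 = 2%N ->
   (forall S, S \in II -> forall l, l \in S -> c 0 l = c 0 (gmax c S) -> f l = f (gmax c S)) -> False.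
  move=> f z0 z1 z2 f0 f1 f2 Hf.
  pose kap l : 'I_3 := inord (f l).
  pose rho (r : 'I_3) := match nat_of_ord r with 0 => z0 | 1 => z1 | _ => z2 end.
  have := @upper_pts R _ II c (gmax c) 3 kap rho K y (gmax_argmx c) Hyf.
  have H2 : forall S, S \in II -> forall l, l \in S -> c 0 l = c 0 (gmax c S) -> kap l = kap (gmax c S).
    by move=> S SI l lS e; rewrite /kap (Hf S SI l lS e).
  have H3 : forall r, kap (rho r) = r.
    move=> r; apply: val_inj; rewrite /kap /rho /=.
    case: r => [[|[|[|k]]] Hr] /=; rewrite ?f0 ?f1 ?f2 ?inordK //.
  move=> /(_ H2 H3); rewrite ry; lia.
case: (classic (exists j1 j2, [/\ j1 != t, j2 != t, j1 != j2, c 0 j1 < c 0 t & c 0 j2 < c 0 t]))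
  => [[j1 [j2 [j1t j2t j12 c1 c2]]]|nA].
  exfalso; apply: (three (fun l => if l == j1 then 0%N else if l == j2 then 1%N else 2%N) j1 j2 t).
  - by rewrite eqxx.
  - by rewrite eq_sym (negbTE j12) eqxx.
  - by rewrite eq_sym (negbTE j1t) eq_sym (negbTE j2t).
  - move=> S SI l lS e; have [h1 h2] := lev S SI l lS e.
    have nz : forall z, c 0 t <= c 0 z -> (z == j1) = false /\ (z == j2) = false.
      by move=> z hz; split; apply/negbTE/eqP => ez; move: hz; rewrite ez leNgt ?c1 ?c2.
    by have [-> ->] := nz _ h1; have [-> ->] := nz _ h2.
case: (classic (exists j u, [/\ j != t, u != t, c 0 j < c 0 t & c 0 t < c 0 u]))
  => [[j [u [jt ut cj cu]]]|nB].
  exfalso; apply: (three (fun l => if l == j then 0%N else if c 0 t < c 0 l then 1%N else 2%N) j u t).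
  - by rewrite eqxx.
  - have -> : (u == j) = false by apply/negbTE/eqP => e; move: cu; rewrite e ltNge (ltW cj).
    by rewrite cu.
  - by rewrite eq_sym (negbTE jt) ltxx.
  - move=> S SI l lS e; have [h1 h2] := lev S SI l lS e.
    have -> : (l == j) = false by apply/negbTE/eqP => e'; move: h1; rewrite e' leNgt cj.
    have -> : (gmax c S == j) = false by apply/negbTE/eqP => e'; move: h2; rewrite e' leNgt cj.
    by rewrite e.
case: (classic (exists u1 u2, [/\ u1 != t, u2 != t, c 0 t < c 0 u2 & c 0 u2 < c 0 u1]))
  => [[u1 [u2 [u1t u2t cu2 cu1]]]|nD1].
  exfalso; apply: (three (fun l => if c 0 u1 <= c 0 l then 0%N else if c 0 u2 <= c 0 l then 1%N else 2%N) u1 u2 t).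
  - by rewrite lexx.
  - by rewrite leNgt cu1 lexx.
  - by rewrite !leNgt (lt_trans cu2 cu1) cu2.
  - by move=> S SI l lS e; rewrite e.
case: (classic (exists j, j != t /\ c 0 j < c 0 t)) => [[j [jt cj]]|nC].
  have Hoth : forall l, l != j -> c 0 l = c 0 t.
    move=> l lj; case: (eqVneq l t) => [->//|lt].
    apply/eqP; rewrite eq_le; apply/andP; split.
      rewrite leNgt; apply/negP => h; apply: nB; exists j, l; split => //.
    rewrite leNgt; apply/negP => h; apply: nA; exists j, l; split => //.
    by rewrite eq_sym.
  have lj : a 0 j < a 0 t.
    case: (boolP (a 0 j < a 0 t)) => // h; exfalso.
    have SI := pairI jt.
    have eg : ga [set j; t] = j.
      have := ga_in SI; rewrite in_pair => /orP [/eqP e|/eqP e] //.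
      have jS : j \in [set j; t] by rewrite in_pair eqxx.
      have := strict SI jS; rewrite e => /(_ jt) h'.
      by rewrite h' in h.
    apply: (no_improve Hc SI (k:=t)); first by rewrite in_pair eqxx orbT.
    by rewrite eg.
  exists j; split => //; rewrite eG.
  apply: (face_eq (gam:=c 0 t) (del:=c 0 t - c 0 j)).
    by rewrite subr_eq0 gt_eqF.
  move=> l; rewrite wL //; case: (eqVneq j l) => [<-|jl] /=; first by ring.
  by rewrite Hoth; [ring | rewrite eq_sym].
have geC : forall l, c 0 t <= c 0 l.
  move=> l; case: (eqVneq l t) => [->//|lt]; rewrite leNgt; apply/negP => h.
  by apply: nC; exists l.
case: (classic (exists u, u != t /\ c 0 t < c 0 u)) => [[u [ut cu]]|nU]; last first.
  exfalso.
  have allc : forall l, c 0 l = c 0 t + 0 * c 0 l.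
    move=> l; rewrite mul0r addr0; apply/eqP; rewrite eq_le geC andbT.
    case: (eqVneq l t) => [->//|lt]; rewrite leNgt; apply/negP => h.
    by apply: nU; exists l.
  have [[K' [x' [Hx' rx']]] _] := dim_P.
  have := Hub K' x'; rewrite rx'.
  have HG : forall i, G (x' i).
    move=> i; rewrite eG; split => //.
    by rewrite (dot_affine allc (Hx' i)) (dot_affine allc Hv) !mul0r.
  move=> /(_ HG); lia.
have eqU : forall l, c 0 t < c 0 l -> c 0 l = c 0 u.
  move=> l hl; have lt : l != t by apply/eqP => e; rewrite e ltxx in hl.
  case: (ltgtP (c 0 l) (c 0 u)) => // h; exfalso; apply: nD1.
    by exists u, l; split.
  by exists l, u; split.
pose u0 := Order.arg_min u (fun l => c 0 t < c 0 l) (fun l => a 0 l).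
have [Pu0 minu0] : c 0 t < c 0 u0 /\ forall l, c 0 t < c 0 l -> a 0 u0 <= a 0 l.
  rewrite /u0; case: (@arg_minP _ _ _ u (fun l => c 0 t < c 0 l) (fun l => a 0 l) cu) => g Pg Hg.
  by split => // l; apply: Hg.
have u0t : u0 != t by apply/eqP => e; rewrite e ltxx in Pu0.
have uu0 : ~~ (a 0 u0 < a 0 t).
  apply/negP => h; have SI := pairI u0t.
  apply: (no_improve Hc SI (k := u0)); first by rewrite in_pair eqxx.
  by rewrite ga_pair_low.
have au0 := up_lt u0t uu0.
have DC : forall l, (a 0 u0 <= a 0 l) = (c 0 t < c 0 l).
  move=> l; apply/idP/idP => [h|]; last exact: minu0.
  rewrite ltNge; apply/negP => hl.
  have lt : l != t by apply/eqP => e; move: h; rewrite e leNgt au0.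
  have cl : c 0 l = c 0 t by apply/eqP; rewrite eq_le hl geC.
  have lu : l != u0 by apply/eqP => e; move: Pu0; rewrite -e cl ltxx.
  have u0l : u0 != l by rewrite eq_sym.
  have hlt : a 0 u0 < a 0 l by rewrite lt_neqAle h andbT; exact: neq_up u0t lt u0l au0.
  have SI := tripI lt u0t lu.
  apply: (no_improve Hc SI (k:=u0)); first by rewrite in_trip eqxx orbT.
  by rewrite (ga_trip lt u0t lu (lt_trans au0 hlt) hlt) cl.
exists u0; split => //; rewrite eG.
apply: (face_eq (gam := c 0 t) (del := c 0 u - c 0 t)).
  by rewrite subr_eq0 gt_eqF.
move=> l; rewrite wU // DC; case: (boolP (c 0 t < c 0 l)) => h /=.
  by rewrite (eqU _ h); ring.
have -> : c 0 l = c 0 t by apply/eqP; rewrite eq_le geC leNgt h.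
ring.
Qed.

End Vert.


Lemma simple_P : (0 < n)%N -> is_simple Q.
Proof.
move=> hn; exists n; split; first exact: dim_P.
move=> v [a [b [Hval Heq]]].
have [Qv bv] : Q v /\ dot a v = b.
  by have h := congr1 (fun f => f v) Heq; simpl in h; rewrite -h.
subst b.
have Huniq : forall x, Q x -> dot a x = dot a v -> x = v.
  by move=> x Qx e; have h := congr1 (fun f => f x) Heq; simpl in h; rewrite h.
have wt : forall j : 'I_n, widen_ord (leqnSn n) j != t.
  by move=> j; rewrite -val_eqE /= neq_ltn ltn_ord.
exists (fun j : 'I_n => Fi a v (widen_ord (leqnSn n) j)).
split.
  move=> i j e; have := Fi_inj Qv Hval Huniq (wt i) (wt j) e.
  by move/(congr1 val) => /= h; apply: val_inj.
split.
  move=> j; split; last exact: Fi_v.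
  split; [exact: (Fi_face Qv Hval Huniq (wt j)) | exact: (Fi_dim Qv Hval Huniq hn (wt j))].
move=> G HG Gv; have [i [it ->]] := classify Qv Hval Huniq hn HG Gv.
exists (Ordinal (ltn_t it)); congr Fi; exact: val_inj.
Qed.

End Spec.

Theorem mainTheorem11 (R : realType) (n : nat) (hn : (1 <= n)%N) :
  is_simple (Qbar R n) /\ has_dim (Qbar R n) n.
Proof. split; [exact: simple_P | exact: dim_P]. Qed.
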